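(* Let $e,f,g$ be the three edges at a vertex $v$, with $g$ the designated minimal edge at $v$ (so $e$ and $f$ are linked). Fix $\lambda(g)$ and the values of $\lambda$ on all edges other than $e,f$. Then $$\int\frac{d\lambda(e)\,d\lambda(f)}{\lambda(e)\lambda(f)}<2,$$ where the integral is over the set of $(\lambda(e),\lambda(f))\in(0,\infty)^2$ for which the resulting point lies in $\Delta_L$.
   Context: $\Gamma$ is a finite trivalent graph with edge set $E$. A linking choice $L$ assigns to each vertex one of its three edges, the designated minimal edge. $\Delta_L$ is the set of $\lambda\in(0,\infty)^E$ such that, at every vertex with edges $a,b,c$: - the triangle inequalities $\lambda(a)\le\lambda(b)+\lambda(c)$, $\lambda(b)\le\lambda(a)+\lambda(c)$, $\lambda(c)\le\lambda(a)+\lambda(b)$ hold, and - the designated minimal edge has $\lambda$-value at most those of the other two. *)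

(* Defs.v *)
From HB Require Import structures.
From mathcomp Require Import all_boot all_order all_algebra.
From mathcomp Require Import all_classical all_reals all_analysis.
Set Implicit Arguments. Unset Strict Implicit. Unset Printing Implicit Defensive.
Import Order.TTheory GRing.Theory Num.Theory.
Local Open Scope ring_scope.

(* A finite trivalent (multi)graph, given by half-edges: [star v i] (i < 3)
   is the i-th edge at vertex v; every edge has exactly two half-edges. *)
Definition trivalent (V E : finType) (star : V -> 'I_3 -> E) : Prop :=
  forall e : E, #|[set p : V * 'I_3 | star p.1 p.2 == e]| = 2%N.

(* A linking choice is L : V -> 'I_3, the index at v of the designated minimal
   edge [star v (L v)]. *)

Definition DeltaL (R : realType) (V E : finType) (star : V -> 'I_3 -> E)
    (L : V -> 'I_3) : set (E -> R) :=
  [set lam | (forall x, 0 < lam x) /\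
     forall v : V,
       let a := lam (star v 0) in
       let b := lam (star v 1) in
       let c := lam (star v 2) in
       [/\ a <= b + c, b <= a + c, c <= a + b &
           forall i : 'I_3, lam (star v (L v)) <= lam (star v i)]].

Definition upd2 (R : Type) (E : eqType) (lam0 : E -> R) (e f : E) (x y : R)
  : E -> R := fun d => if d == e then x else if d == f then y else lam0 d.

(* Main.v *)
Require Import Defs.
From HB Require Import structures.
From mathcomp Require Import all_boot all_order all_algebra.
From mathcomp Require Import all_classical all_reals all_analysis.
From mathcomp Require Import ring lra zify.
From mathcomp Require Import measurable_realfun.
Import Order.TTheory GRing.Theory Num.Theory.
Local Open Scope classical_set_scope.
Local Open Scope ring_scope.

Section S.
Variable R : realType.

Lemma int_mono d (T : measurableType d) (mu : {measure set T -> \bar R})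
  (D : set T) (f G : T -> \bar R) :
  (forall x, D x -> (0 <= f x)%E) -> (forall x, (0 <= G x)%E) ->
  (forall x, D x -> (f x <= G x)%E) ->
  (\int[mu]_(x in D) f x <= \int[mu]_x G x)%E.
Proof.
move=> f0 G0 fG.
rewrite ge0_integralE // ge0_integralTE //.
apply: ereal_sup_le => _ [h hf <-]; exists h => //= x.
apply: le_trans (hf x) _; rewrite /patch; case: ifP => [/set_mem Dx|_]; first exact: fG.
exact: G0.
Qed.

Definition t (n : nat) : R := ((n + 17)%N%:R - (maxn 8 n)%:R) / ((n + 8)%N%:R)^+2.

Lemma t_ge0 n : 0 <= t n.
Proof.
rewrite /t divr_ge0 ?exprn_ge0 ?ler0n // subr_ge0 ler_nat.
by rewrite geq_max; apply/andP; split; lia.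
Qed.

Lemma head : \sum_(0 <= k < 8) t k <= 4/5.
Proof.
rewrite /index_iota /= !big_cons big_nil /t /maxn /addn /addn_rec /=.
lra.
Qed.

Lemma tele (x : R) : 0 < x -> 1 / (x + 1)^+2 <= 1 / x - 1 / (x + 1).
Proof.
move=> x0.
have E : 1 / x - 1 / (x + 1) - 1 / (x + 1)^+2 = 1 / (x * (x + 1)^+2).
  by field; apply/andP; split; apply/lt0r_neq0 => //; lra.
rewrite -subr_ge0 E divr_ge0 // mulr_ge0 ?exprn_ge0; lra.
Qed.

Lemma partial8 N : \sum_(0 <= k < N + 8) t k <= 29/15 - 17 / (N%:R + 15).
Proof.
elim: N => [|N IH].
  rewrite add0n add0r; apply: le_trans (head) _; lra.
rewrite addSn big_nat_recr //=.
have -> : t (N + 8) = 17 / (N%:R + 16)^+2.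
  rewrite /t (maxn_idPr (leq_addl N 8)).
  by rewrite !natrD; congr (_ / _); [lra | congr (_ ^+ 2); lra].
have := tele (N%:R + 15) _.
have -> : N%:R + 15 + 1 = N.+1%:R + 15 :> R by rewrite -natr1; lra.
have -> : N.+1%:R + 15 = N%:R + 16 :> R by rewrite -natr1; lra.
move=> /(_ (ltr_wpDl (ler0n _ _) (ltr0n _ 15))).
move: IH; lra.
Qed.
Lemma partial N : \sum_(0 <= k < N) t k <= 29/15.
Proof.
apply: le_trans (_ : \sum_(0 <= k < N + 8) t k <= _).
  rewrite [leRHS](big_cat_nat (n := N)) ?leq_addr //= lerDl.
  by apply: sumr_ge0 => i _; apply: t_ge0.
apply: le_trans (partial8 N) _.
by rewrite lerBlDr lerDl divr_ge0.
Qed.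

Lemma series_bound : (\sum_(n <oo) (t n)%:E <= (29/15)%:E)%E.
Proof.
apply: lime_le.
  by apply: is_cvg_nneseries => n _ _; rewrite lee_fin t_ge0.
apply: nearW => N /=.
by rewrite sumEFin lee_fin partial.
Qed.
Definition cA (c : R) (n : nat) : set R :=
  `[c * (n + 8)%N%:R / 8, c * (n + 9)%N%:R / 8[.
Definition cB (c : R) (n : nat) : set R :=
  `[c * (maxn 8 n)%:R / 8, c * (n + 17)%N%:R / 8[.
Definition kk (c : R) (n : nat) : R := 32 / (c ^+ 2 * ((n + 8)%N%:R) ^+ 2).
Definition G1 (c : R) (n : nat) (p : R * R) : \bar R :=
  (kk c n * \1_(cA c n `*` cB c n) p)%:E.
Definition G2 (c : R) (n : nat) (p : R * R) : \bar R :=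
  (kk c n * \1_(cB c n `*` cA c n) p)%:E.

Lemma kk_gt0 c n : 0 < c -> 0 < kk c n.
Proof.
move=> c0; rewrite /kk divr_gt0 // mulr_gt0 // exprn_gt0 // ltr0n; lia.
Qed.

Lemma lamA (c : R) n : 0 < c -> lebesgue_measure (cA c n) = (c / 8)%:E.
Proof.
move=> c0; rewrite /cA lebesgue_measure_itv /= lte_fin.
rewrite ifT; last by rewrite ltr_pM2r ?invr_gt0 // ltr_pM2l // ltr_nat; lia.
by rewrite -EFinD; congr EFin; rewrite !natrD; field.
Qed.

Lemma lamB (c : R) n : 0 < c -> lebesgue_measure (cB c n) =
  (c * (n + 17)%N%:R / 8 - c * (maxn 8 n)%:R / 8)%:E.
Proof.
move=> c0; rewrite /cB lebesgue_measure_itv /= lte_fin.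
rewrite ifT; last by rewrite ltr_pM2r ?invr_gt0 // ltr_pM2l // ltr_nat gtn_max; apply/andP; split; lia.
by rewrite -EFinD.
Qed.

Lemma mcA (c : R) n : measurable (cA c n). Proof. exact: measurable_itv. Qed.
Lemma mcB (c : R) n : measurable (cB c n). Proof. exact: measurable_itv. Qed.

Lemma intG1 (c : R) n : 0 < c ->
  (\int[(@lebesgue_measure R \x @lebesgue_measure R)%E]_p G1 c n p =
   (kk c n)%:E * ((c / 8)%:E *
     (c * (n + 17)%N%:R / 8 - c * (maxn 8 n)%:R / 8)%:E))%E.
Proof.
move=> c0; rewrite /G1.
have := @integralZl_indic _ _ R (@lebesgue_measure R \x @lebesgue_measure R)%E
  setT measurableT (fun _ => cA c n `*` cB c n) (kk c n).
rewrite /= => ->; last 2 first.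
  by move=> /ltW; rewrite leNgt kk_gt0.
  exact: measurableX (mcA c n) (mcB c n).
rewrite integral_indic //; last exact: measurableX (mcA c n) (mcB c n).
rewrite setIT -(@lamA c n c0) -(@lamB c n c0); congr (_ * _)%E; apply: product_measure1E; exact: measurable_itv.
Qed.

Lemma intG2 (c : R) n : 0 < c ->
  (\int[(@lebesgue_measure R \x @lebesgue_measure R)%E]_p G2 c n p =
   (kk c n)%:E * ((c * (n + 17)%N%:R / 8 - c * (maxn 8 n)%:R / 8)%:E *
     (c / 8)%:E))%E.
Proof.
move=> c0; rewrite /G2.
have := @integralZl_indic _ _ R (@lebesgue_measure R \x @lebesgue_measure R)%E
  setT measurableT (fun _ => cB c n `*` cA c n) (kk c n).
rewrite /= => ->; last 2 first.
  by move=> /ltW; rewrite leNgt kk_gt0.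
  exact: measurableX (mcB c n) (mcA c n).
rewrite integral_indic //; last exact: measurableX (mcB c n) (mcA c n).
rewrite setIT -(@lamA c n c0) -(@lamB c n c0); congr (_ * _)%E; apply: product_measure1E; exact: measurable_itv.
Qed.
Lemma G1_ge0 (c : R) n p : 0 < c -> (0 <= G1 c n p)%E.
Proof. by move=> c0; rewrite lee_fin mulr_ge0 // ltW // kk_gt0. Qed.
Lemma G2_ge0 (c : R) n p : 0 < c -> (0 <= G2 c n p)%E.
Proof. by move=> c0; rewrite lee_fin mulr_ge0 // ltW // kk_gt0. Qed.

Lemma intG (c : R) n : 0 < c ->
  (\int[(@lebesgue_measure R \x @lebesgue_measure R)%E]_p (G1 c n p + G2 c n p) =
   (t n)%:E)%E.
Proof.
move=> c0.
rewrite ge0_integralD //; last 4 first.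
- by move=> p _; exact: G1_ge0.
- apply/measurable_EFinP; apply: measurable_funM; first exact: measurable_cst.
  by apply: measurable_indic; apply: measurableX; exact: measurable_itv.
- by move=> p _; exact: G2_ge0.
- apply/measurable_EFinP; apply: measurable_funM; first exact: measurable_cst.
  by apply: measurable_indic; apply: measurableX; exact: measurable_itv.
rewrite intG1 // intG2 // -!EFinM -EFinD; congr EFin.
have n8 : (n + 8)%N%:R != 0 :> R by rewrite pnatr_eq0; lia.
rewrite /kk /t; field.
apply/andP; split; last exact: lt0r_neq0.
by rewrite -natrD.
Qed.
Lemma cell (c x y : R) : 0 < c -> c <= x -> c <= y -> x <= y + c -> y <= x + c ->
  exists n, [/\ cA c n x, cB c n y & 1 / (2 * x ^+ 2) <= kk c n].
Proof.
move=> c0 cx cy xy yx.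
have u0 : 0 <= 8 * x / c by rewrite divr_ge0 //; lra.
set m := Num.truncn (8 * x / c).
have /andP[mu um] := truncn_itv u0.
rewrite -/m ler_pdivlMr // in mu.
rewrite -/m ltr_pdivrMr // in um.
have m8 : (8 <= m)%N.
  by rewrite truncn_ge_nat // ler_pdivlMr //; lra.
have h1 : c * m%:R <= 8 * x by rewrite mulrC.
have h2 : 8 * x < c * m%:R + c.
  have E : m.+1%:R = m%:R + 1 :> R by rewrite natr1.
  by move: um; rewrite E mulrDl mul1r; lra.
have cm0 : 0 < c * m%:R by rewrite mulr_gt0 // ltr0n; lia.
exists (m - 8)%N.
rewrite /cA /cB /kk /= !in_itv /=.
rewrite (_ : (m - 8 + 8 = m)%N); last by lia.
rewrite (_ : (m - 8 + 9 = m + 1)%N); last by lia.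
rewrite (_ : (m - 8 + 17 = m + 9)%N); last by lia.
rewrite !natrD.
split.
- apply/andP; split; lra.
- apply/andP; split; last by lra.
  case: (leqP 8 (m - 8)%N) => h.
    rewrite natrB; [lra | lia].
  lra.
- have x0 : 0 < x by lra.
  rewrite -[32 / _]invf_div div1r lef_pV2 ?posrE; last 2 first.
  + by rewrite mulr_gt0 // exprn_gt0.
  + by rewrite divr_gt0 // -exprMn exprn_gt0.
  rewrite -exprMn; nra.
Qed.
Lemma amgm (x y : R) : 0 < x -> 0 < y -> (x * y)^-1 <= 1 / (2 * x ^+ 2) + 1 / (2 * y ^+ 2).
Proof.
move=> x0 y0.
have E : 1 / (2 * x ^+ 2) + 1 / (2 * y ^+ 2) - (x * y)^-1 = (x - y) ^+ 2 / (2 * x ^+ 2 * y ^+ 2).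
  by field; rewrite !gt_eqF.
by rewrite -subr_ge0 E divr_ge0 ?sqr_ge0 // !mulr_ge0 // ?exprn_ge0 // ltW.
Qed.

Lemma single (u : (\bar R)^nat) k : (forall n, (0 <= u n)%E) -> (u k <= \sum_(n <oo) u n)%E.
Proof.
move=> u0; apply: le_trans (nneseries_lim_ge (k.+1) (fun n _ _ => u0 n)).
rewrite big_nat_recr //=; apply: lee_paddl => //.
by apply: sume_ge0 => n _.
Qed.

Lemma cover (c x y : R) : 0 < c -> c <= x -> c <= y -> x <= y + c -> y <= x + c ->
  (((x * y)^-1)%:E <= \sum_(n <oo) (G1 c n (x, y) + G2 c n (x, y)))%E.
Proof.
move=> c0 cx cy xy yx.
have [n0 [Ax By kx]] := @cell c x y c0 cx cy xy yx.
have [n1 [Ay Bx ky]] := @cell c y x c0 cy cx yx xy.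
rewrite nneseriesD; last 2 first.
- by move=> n _ _; exact: G1_ge0.
- by move=> n _ _; exact: G2_ge0.
apply: le_trans (_ : ((1 / (2 * x ^+ 2))%:E + (1 / (2 * y ^+ 2))%:E <= _)%E).
  by rewrite -EFinD lee_fin amgm //; lra.
apply: leeD.
- apply: le_trans _ (@single (fun n => G1 c n (x, y)) n0 _); last by move=> n; exact: G1_ge0.
  by rewrite /G1 indicE mem_set //= mulr1 lee_fin.
- apply: le_trans _ (@single (fun n => G2 c n (x, y)) n1 _); last by move=> n; exact: G2_ge0.
  by rewrite /G2 indicE mem_set //= mulr1 lee_fin.
Qed.
Lemma tri3 (s : 'I_3 -> R) : s 0 <= s 1 + s 2 -> s 1 <= s 0 + s 2 -> s 2 <= s 0 + s 1 ->
  forall p q r : 'I_3, p != q -> p != r -> q != r -> s p <= s q + s r.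
Proof.
move=> h0 h1 h2.
have E : forall k : 'I_3, [\/ k = 0, k = 1 | k = 2].
  by case=> [[|[|[|k]]] Hk] //; [apply: Or31 | apply: Or32 | apply: Or33]; apply: val_inj.
move=> p q r.
by case: (E p) => ->; case: (E q) => ->; case: (E r) => -> //= _ _ _; lra.
Qed.
End S.

Arguments G1 {R}.
Arguments G2 {R}.
Ltac mG := apply/measurable_EFinP; apply: measurable_funM;
  [exact: measurable_cst | by apply: measurable_indic; apply: measurableX; exact: measurable_itv].

Theorem mainTheorem9 (R : realType) (V E : finType) (star : V -> 'I_3 -> E)
  (L : V -> 'I_3) (v : V) (e f g : E) (lam0 : E -> R) :
  trivalent star ->
  e != f -> e != g -> f != g ->
  star v (L v) = g ->
  (exists i j : 'I_3, [/\ i != L v, j != L v, star v i = e & star v j = f]) ->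
  (\int[(@lebesgue_measure R \x @lebesgue_measure R)%E]_(p in
      [set p : R * R | (0 < p.1)%R /\ (0 < p.2)%R /\
                       DeltaL star L (upd2 lam0 e f p.1 p.2)])
     ((p.1 * p.2)^-1)%R%:E < 2%:E)%E.
Proof.
move=> _ ef eg fg gL [i [j [iL jL ei fj]]].
set c := lam0 g.
set D := [set p : R * R | _].
have key : forall p, D p ->
    [/\ 0 < c, c <= p.1, c <= p.2, p.1 <= p.2 + c & p.2 <= p.1 + c].
  case=> x y /= [x0 [y0 [pos H]]].
  have [t0 t1 t2 mn] := H v.
  set lam := upd2 lam0 e f x y in pos t0 t1 t2 mn.
  have lg : lam g = c by rewrite /lam /upd2 eq_sym (negbTE eg) eq_sym (negbTE fg).
  have le_ : lam e = x by rewrite /lam /upd2 eqxx.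
  have lf : lam f = y by rewrite /lam /upd2 eq_sym (negbTE ef) eqxx.
  have ij : i != j.
    by apply/eqP => ij; move: ef; rewrite -ei -fj ij eqxx.
  have T := @tri3 R (fun k => lam (star v k)) t0 t1 t2.
  have h1 := T i j (L v) ij iL jL.
  have ji : j != i by rewrite eq_sym.
  have h2 := T j i (L v) ji jL iL.
  have m1 := mn i.
  have m2 := mn j.
  have p := pos g.
  rewrite gL ei fj lg le_ lf in h1 h2 m1 m2.
  by rewrite lg in p.
have f0 : forall p, D p -> (0 <= ((p.1 * p.2)^-1)%:E)%E.
  move=> p /key [c0 cx cy _ _]; rewrite lee_fin invr_ge0 mulr_ge0 //; lra.
case: (lerP c 0) => [cle0 | c0].
  apply: le_lt_trans; first apply: (@int_mono R _ _ _ _ _ (fun _ => 0%E)).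
  - exact: f0.
  - by [].
  - by move=> p /key [c0 _ _ _ _]; have := lt_le_trans c0 cle0; rewrite ltxx.
  - by rewrite integral0 lte_fin.
apply: le_lt_trans; first apply: (@int_mono R _ _ (@lebesgue_measure R \x @lebesgue_measure R)%E _ _
   (fun p => (\sum_(n <oo) (G1 c n p + G2 c n p)%E)%E)).
- exact: f0.
- move=> p; apply: nneseries_ge0 => n _ _.
  by rewrite adde_ge0 // ?G1_ge0 ?G2_ge0.
- by case=> x y /key [_ cx cy xy yx]; exact: cover.
rewrite integral_nneseries //; last 2 first.
- by move=> n; apply: emeasurable_funD; mG.
- by move=> n p _; rewrite adde_ge0 // ?G1_ge0 ?G2_ge0.
rewrite (eq_eseriesr (fun n _ => @intG R c n c0)).
apply: le_lt_trans (series_bound R) _.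
by rewrite lte_fin; lra.
Qed.
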